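(* Let $(\Delta,U,\mu_\Delta)$ be an expanding Young tower with $\mu_\Delta(\Delta_n)\le C\rho^n$. There exists $C>0$ such that for every finite $F\subset\mathbb N$ and all positive integers $(n_i)_{i\in F}$, $$\mu_\Delta\big(\{x\in\Delta_0:\forall i\in F,\ \phi(U_0^ix)=n_i\}\big)\le\prod_{i\in F}(C\rho^{n_i}).$$
   Context: Expanding Young tower: probability space $(\Delta,\mu_\Delta)$, measure-preserving $U$, partition $\{\Delta_{k,p}\}_{0\le k<r_p}$ with $U:\Delta_{k,p}\to\Delta_{k+1,p}$ and $U:\Delta_{r_p-1,p}\to\Delta_0=\bigcup_m\Delta_{0,m}$ measurable isomorphisms, and bounded distortion $|1-J(x)/J(y)|\le C\beta^{s(Ux,Uy)}$ for the inverse Jacobian $J$ of $U$ and $x,y$ in a common partition element ($s$ the separation time counted in returns to the basis). $\Delta_n=\bigcup_p\Delta_{n,p}$. $\phi$ is the first return time to $\Delta_0$ and $U_0=U^\phi$ the induced map on $\Delta_0$. *)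

(* Defs.v *)
From HB Require Import structures.
From mathcomp Require Import all_boot all_order all_algebra.
From mathcomp Require Import all_classical all_reals all_analysis.

Set Implicit Arguments.
Unset Strict Implicit.
Unset Printing Implicit Defensive.

Import Order.TTheory GRing.Theory Num.Theory.
Local Open Scope classical_set_scope.
Local Open Scope ring_scope.

Section YoungTower.
Context {d : measure_display} {T : measurableType d} {R : realType}
        {I : countType}.

Definition level (D : nat -> I -> set T) (n : nat) : set T :=
  \bigcup_(p in [set: I]) D n p.

Definition same_elt (D : nat -> I -> set T) (x y : T) : Prop :=
  exists k p, D k p x /\ D k p y.

Definition visits (U : T -> T) (A : set T) (x : T) (m : nat) : nat :=
  count (fun k => `[< A (iter k U x) >]) (iota 0 m).

(* s(x,y) >= n, where s is the separation time counted in returns to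
   the basis A = Delta_0: the orbits of x and y stay in common partition
   elements at every time k at which fewer than n visits to A occurred. *)
Definition sep_ge (D : nat -> I -> set T) (U : T -> T) (A : set T)
  (x y : T) (n : nat) : Prop :=
  forall k, (visits U A x k < n)%N -> same_elt D (iter k U x) (iter k U y).

(* first return time to A (0 if x never returns) *)
Definition first_return (U : T -> T) (A : set T) (x : T) : nat :=
  match pselect (exists n, `[< A (iter n.+1 U x) >]) with
  | left h => (ex_minn h).+1
  | right _ => 0%N
  end.

(* Expanding Young tower (Delta = T, mu, U) with partition
   {Delta_{k,p}}_{0 <= k < r p} (D k p = Delta_{k,p}), inverse Jacobian J
   and bounded distortion constants Cd, beta. *)
Definition expanding_young_tower (mu : probability T R) (U : T -> T)
  (D : nat -> I -> set T) (r : I -> nat) (J : T -> R) (Cd beta : R) : Prop :=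
  let Delta0 := level D 0 in
  [/\
      (forall p, (0 < r p)%N) /\
      (forall k p, measurable (D k p)) /\
      (forall k p, (r p <= k)%N -> D k p = set0) /\
      (forall x, exists k p, D k p x) /\
      (forall k p k' p' x, D k p x -> D k' p' x -> k = k' /\ p = p'),
      measurable_fun setT U /\
      (forall A, measurable A -> mu (U @^-1` A) = mu A),
      (forall k p, (k.+1 < r p)%N -> set_bij (D k p) (D k.+1 p) U) /\
      (forall p, set_bij (D (r p).-1 p) Delta0 U) /\
      (forall k p A, measurable A -> A `<=` D k p -> measurable (U @` A)),
      (forall x, 0 < J x) /\ measurable_fun setT J /\
      (forall k p A, measurable A -> A `<=` D k p ->
         mu (U @` A) = (\int[mu]_(x in A) ((J x)^-1)%:E)%E) &
      [/\ 0 < Cd, 0 < beta, beta < 1 &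
       forall k p x y n, D k p x -> D k p y ->
         sep_ge D U Delta0 (U x) (U y) n ->
         `|1 - J x / J y| <= Cd * beta ^+ n]].

End YoungTower.

(* Main.v *)
Require Import Defs.
From HB Require Import structures.
From mathcomp Require Import all_boot all_order all_algebra.
From mathcomp Require Import all_classical all_reals all_analysis.
From mathcomp Require Import finmap.
From mathcomp Require Import measurable_realfun lebesgue_integral.
From mathcomp Require Import ring lra.

Import Order.TTheory GRing.Theory Num.Theory.
Local Open Scope classical_set_scope.
Local Open Scope ring_scope.

Set Implicit Arguments.
Unset Strict Implicit.


Ltac destr H :=
  case: H => [[rpos [mD [Dem [Dcov Ddis]]]] [mU Upres]
    [bstep [btop bimg]] [Jpos [mJ Jint]] [Cd0 b0 b1 dist]].

Lemma L_lt d (T : measurableType d) (R : realType) (I : countType)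
  (mu : probability T R) U D r J Cd beta :
  @expanding_young_tower d T R I mu U D r J Cd beta ->
  forall k p x, D k p x -> (k < r p)%N.
Proof.
move=> H; destr H => k p x Dx; rewrite ltnNge; apply/negP => le.
by move: Dx; rewrite Dem.
Qed.

Lemma L_up d (T : measurableType d) (R : realType) (I : countType)
  (mu : probability T R) U D r J Cd beta :
  @expanding_young_tower d T R I mu U D r J Cd beta ->
  forall k p x, D k p x -> (k.+1 < r p)%N -> D k.+1 p (U x).
Proof.
move=> H; destr H => k p x Dx lt.
by have [f _ _] := bstep k p lt; apply: f.
Qed.

Lemma L_top d (T : measurableType d) (R : realType) (I : countType)
  (mu : probability T R) U D r J Cd beta :
  @expanding_young_tower d T R I mu U D r J Cd beta ->
  forall p x, D (r p).-1 p x -> level D 0 (U x).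
Proof.
move=> H; destr H => p x Dx.
by have [f _ _] := btop p; apply: f.
Qed.

Lemma L_back d (T : measurableType d) (R : realType) (I : countType)
  (mu : probability T R) U D r J Cd beta :
  @expanding_young_tower d T R I mu U D r J Cd beta ->
  forall k p x, D k.+1 p (U x) -> D k p x.
Proof.
move=> H => k p x DU.
have H' := H; destr H'.
have [k' [q Dq]] := Dcov x.
have ltq := L_lt H Dq.
case: (ltnP k'.+1 (r q)) => lt.
  have := L_up H Dq lt => Dq'.
  by have [[->] ->] := Ddis _ _ _ _ _ DU Dq'.
have ek : k' = (r q).-1 by move: ltq lt; case: (r q) => // m; rewrite !ltnS => a b; apply/eqP; rewrite eqn_leq a b.
rewrite ek in Dq.
have [q' _ Dq''] := L_top H Dq.
by have [] := Ddis _ _ _ _ _ DU Dq''.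
Qed.

Lemma L_backn d (T : measurableType d) (R : realType) (I : countType)
  (mu : probability T R) U D r J Cd beta :
  @expanding_young_tower d T R I mu U D r J Cd beta ->
  forall p k x, D k p (iter k U x) -> D 0 p x.
Proof.
move=> H p; elim=> [//|k IH] x /=.
by move=> /(L_back H) /IH.
Qed.

Lemma L_fwd d (T : measurableType d) (R : realType) (I : countType)
  (mu : probability T R) U D r J Cd beta :
  @expanding_young_tower d T R I mu U D r J Cd beta ->
  forall p x, D 0 p x -> forall k, (k < r p)%N -> D k p (iter k U x).
Proof.
move=> H p x Dx; elim=> [//|k IH] lt /=.
by apply: (L_up H) => //; apply: IH; apply: ltnW.
Qed.

Lemma L_phi d (T : measurableType d) (R : realType) (I : countType)
  (mu : probability T R) U D r J Cd beta :
  @expanding_young_tower d T R I mu U D r J Cd beta ->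
  forall p x, D 0 p x -> first_return U (level D 0) x = r p.
Proof.
move=> H p x Dx.
have H' := H; destr H'.
have rp := rpos p.
have Htop : D (r p).-1 p (iter (r p).-1 U x) by apply: (L_fwd H) => //; rewrite prednK.
rewrite /first_return; case: pselect => [h|nh]; last first.
  exfalso; apply: nh; exists (r p).-1; apply/asboolP => /=.
  exact: (L_top H Htop).
case: ex_minnP => m /asboolP /= Hm min.
have le : (m <= (r p).-1)%N by apply: min; apply/asboolP; exact: (L_top H Htop).
have ge : ((r p).-1 <= m)%N.
  rewrite leqNgt; apply/negP => lt.
  have Dm : D m.+1 p (iter m.+1 U x) by apply: (L_fwd H) => //; rewrite -ltn_predRL.
  have [q _ Dq] := Hm.
  by have [] := Ddis _ _ _ _ _ Dm Dq.
have -> : m = (r p).-1 by apply/eqP; rewrite eqn_leq le ge.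
by rewrite prednK.
Qed.


Lemma inv_bounds (R : realType) (a b K : R) : 0 < a -> 0 < b -> 0 < K ->
  a <= K * b -> b <= K * a -> b^-1 / K <= a^-1 /\ a^-1 <= K * b^-1.
Proof.
move=> a0 b0 K0 h1 h2.
have ea : a * a^-1 = 1 by rewrite mulfV // gt_eqF.
have eb : b * b^-1 = 1 by rewrite mulfV // gt_eqF.
have eK : K * K^-1 = 1 by rewrite mulfV // gt_eqF.
have ai : 0 < a^-1 by rewrite invr_gt0.
have bi : 0 < b^-1 by rewrite invr_gt0.
have Ki : 0 < K^-1 by rewrite invr_gt0.
set x := a^-1 in ea ai *; set y := b^-1 in eb bi *; set z := K^-1 in eK Ki *.
split; nra.
Qed.

Lemma mJinv d (T : measurableType d) (R : realType) (J : T -> R) :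
  (forall x, 0 < J x) -> measurable_fun setT J ->
  measurable_fun setT (EFin \o (fun x => (J x)^-1)).
Proof.
move=> Jp mJ.
apply/measurable_EFinP.
have := @measurable_comp _ _ _ T R R `]0, +oo[%classic GRing.inv setT J.
apply.
- exact: measurable_itv.
- by move=> _ [x _ <-] /=; rewrite in_itv /= andbT.
- apply: open_continuous_measurable_fun.
    exact: interval_open.
  move=> x /set_mem; rewrite /= in_itv /= andbT => x0.
  by apply: inv_continuous; rewrite gt_eqF.
- exact: mJ.
Qed.

Lemma L_pre d (T : measurableType d) (f : T -> T) A :
  measurable_fun setT f -> measurable A -> measurable (f @^-1` A).
Proof. by move=> mf mA; rewrite -[_ @^-1` _]setTI; apply: mf. Qed.

Lemma L_iter_meas d (T : measurableType d) (U : T -> T) :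
  measurable_fun setT U -> forall j, measurable_fun setT (iter j U).
Proof.
move=> mU; elim=> [|j IH]; first exact: measurable_id.
have -> : iter j.+1 U = U \o iter j U by apply/funext => x.
exact: measurableT_comp.
Qed.

Lemma L_iter_pres d (T : measurableType d) (R : realType) (I : countType)
  (mu : probability T R) U D r J Cd beta :
  @expanding_young_tower d T R I mu U D r J Cd beta ->
  forall j A, measurable A -> mu (iter j U @^-1` A) = mu A.
Proof.
move=> H; have H' := H; destr H'.
elim=> [//|j IH] A mA.
have -> : iter j.+1 U @^-1` A = U @^-1` (iter j U @^-1` A).
  by apply/seteqP; split => x /=; rewrite -iterSr.
rewrite Upres ?IH //.
exact: L_pre (L_iter_meas mU j) mA.
Qed.

Lemma L_fin d (T : measurableType d) (R : realType) (mu : probability T R) X :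
  measurable X -> mu X = (fine (mu X))%:E.
Proof.
move=> mX; rewrite fineK // ge0_fin_numE ?measure_ge0 //.
exact: (le_lt_trans (probability_le1 mu mX) (ltry 1)).
Qed.

Lemma L_dist d (T : measurableType d) (R : realType) (I : countType)
  (mu : probability T R) U D r J Cd beta :
  @expanding_young_tower d T R I mu U D r J Cd beta ->
  forall p B, measurable B -> B `<=` level D 0 ->
  (mu (level D 0) * mu (D (r p).-1 p `&` U @^-1` B) <=
    ((1 + Cd) ^+ 2)%:E * mu (D (r p).-1 p) * mu B)%E.
Proof.
move=> H; have H' := H; destr H' => p B mB sB.
set Tp := D (r p).-1 p.
set A := Tp `&` U @^-1` B.
have mTp : measurable Tp by apply: mD.
have mA : measurable A by apply: measurableI => //; exact: L_pre.
have ml0 : measurable (level D 0).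
  by apply: countable_bigcupT_measurable; [exact: countableP|move=> q; exact: mD].
have K0 : 0 < 1 + Cd by rewrite addr_gt0.
case: (pselect (exists y, Tp y)) => [[y0 Ty0]|nT]; last first.
  have -> : A = set0.
    by apply/seteqP; split => x // [Tx _]; exfalso; apply: nT; exists x.
  by rewrite measure0 mule0 mule_ge0 // mule_ge0 // lee_fin sqr_ge0.
set K := 1 + Cd.
set c := (J y0)^-1.
have c0 : 0 < c by rewrite invr_gt0.
have bnd : forall x, Tp x -> c / K <= (J x)^-1 /\ (J x)^-1 <= K * c.
  move=> x Tx; apply: inv_bounds => //.
  - have := dist _ _ _ _ 0 Tx Ty0 (fun k => ltac:(by rewrite ltn0)).
    rewrite expr0 mulr1 => h.
    have h' : J x / J y0 <= K.
      have := ler_norm (J x / J y0 - 1); rewrite distrC => h2.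
      rewrite /K; lra.
    by rewrite -ler_pdivrMr.
  - have := dist _ _ _ _ 0 Ty0 Tx (fun k => ltac:(by rewrite ltn0)).
    rewrite expr0 mulr1 => h.
    have h' : J y0 / J x <= K.
      have := ler_norm (J y0 / J x - 1); rewrite distrC => h2.
      rewrite /K; lra.
    by rewrite -ler_pdivrMr.
have mJi := mJinv Jpos mJ.
have eB : U @` A = B.
  apply/seteqP; split; first by move=> _ [x [_ Bx] <-].
  move=> b Bb; have [_ _ sj] := btop p.
  have [x Tx Uxb] := sj b (sB b Bb).
  by exists x => //; split => //=; rewrite Uxb.
have e0 : U @` Tp = level D 0.
  apply/seteqP; split.
    by have [f _ _] := btop p; move=> _ [x Tx <-]; apply: f.
  by have [_ _ sj] := btop p.
have iB : (mu B >= (c / K)%:E * mu A)%E.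
  rewrite -eB (Jint (r p).-1 p A mA) //; last by move=> x [].
  rewrite -integral_cst //.
  apply: ge0_le_integral => //.

  1-3: first [ exact: measurable_cst | exact: measurable_funTS mJi
             | by move=> x _; rewrite lee_fin divr_ge0 // ltW
             | by move=> x [Tx _]; rewrite lee_fin; have [] := bnd x Tx ].
have i0 : (mu (level D 0) <= (K * c)%:E * mu Tp)%E.
  rewrite -e0 (Jint (r p).-1 p Tp mTp) //.
  rewrite -integral_cst //.
  apply: ge0_le_integral => //.
  1-3: first [ exact: measurable_cst | exact: measurable_funTS mJi
             | by move=> x _; rewrite lee_fin ltW // invr_gt0
             | by move=> x Tx; rewrite lee_fin; have [] := bnd x Tx ].
move: iB i0; rewrite (L_fin mu mB) (L_fin mu mA) (L_fin mu mTp) (L_fin mu ml0).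
rewrite -!EFinM !lee_fin.
have := fine_ge0 (measure_ge0 mu A).
have := fine_ge0 (measure_ge0 mu Tp).
set a := fine (mu A); set t := fine (mu Tp); set b := fine (mu B).
set l := fine (mu (level D 0)) => t0 a0 h1 h2.
have eK : K * K^-1 = 1 by rewrite mulfV // gt_eqF.
have Ki : 0 < K^-1 by rewrite invr_gt0.
move: h1; rewrite mulrAC => h1.
set z := K^-1 in eK Ki h1.
have e1 : l * a <= K * c * t * a by rewrite ler_wpM2r.
apply: (le_trans e1).
have h3 : K ^+ 2 * t * (c * a * z) = (K * z) * (K * c * t * a) by ring.
rewrite eK mul1r in h3; rewrite -h3.
by rewrite ler_wpM2l // mulr_ge0 // exprn_ge0 // ltW.
Qed.


Definition pk {T : Type} {I : countType} (G : I -> set T) (k : nat) : set T :=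
  match pickle_inv k with Some p => G p | None => set0 end.

Lemma pk_triv {T : Type} {I : countType} (D : nat -> I -> set T) (h : I -> nat)
  (G : I -> set T) :
  (forall k p k' p' x, D k p x -> D k' p' x -> k = k' /\ p = p') ->
  (forall p, G p `<=` D (h p) p) -> trivIset setT (pk G).
Proof.
move=> Ddis sG i j _ _ [x [Gi Gj]].
rewrite /pk in Gi Gj.
have ei := @pickle_invK I i; have ej := @pickle_invK I j.
move: Gi Gj ei ej.
case: (pickle_inv i) => [p|] //; case: (pickle_inv j) => [q|] // Gp Gq /= ei ej.
have [_ epq] := Ddis _ _ _ _ _ (sG p x Gp) (sG q x Gq).
by rewrite -ei -ej epq.
Qed.

Lemma pk_meas d (T : measurableType d) (I : countType) (G : I -> set T) :
  (forall p, measurable (G p)) -> forall k, measurable (pk G k).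
Proof. by move=> mG k; rewrite /pk; case: pickle_inv. Qed.

Lemma pk_cup {T : Type} {I : countType} (G : I -> set T) :
  \bigcup_k pk G k = \bigcup_p G p.
Proof.
apply/seteqP; split => x [k _].
  by rewrite /pk; case: pickle_inv => // p Gp; exists p.
by move=> Gx; exists (choice.pickle k) => //; rewrite /pk pickleK_inv.
Qed.

Definition phiF d (T : measurableType d) (I : countType) U (D : nat -> I -> set T) :=
  first_return U (level D 0).
Definition U0F d (T : measurableType d) (I : countType) U (D : nat -> I -> set T) x :=
  iter (phiF U D x) U x.
Definition Sset d (T : measurableType d) (I : countType) U (D : nat -> I -> set T)
  (P : pred nat) (n : nat -> nat) :=
  [set x | level D 0 x /\ forall i, P i -> phiF U D (iter i (U0F U D) x) = n i].

Definition condp (I : Type) (r : I -> nat) (P : pred nat) (n : nat -> nat) p :=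
  P 0%N ==> (r p == n 0%N).

Lemma Sset_dec d (T : measurableType d) (R : realType) (I : countType)
  (mu : probability T R) U D r J Cd beta :
  @expanding_young_tower d T R I mu U D r J Cd beta ->
  forall P n, Sset U D P n =
   \bigcup_p (if condp r P n p then D 0 p `&` iter (r p) U @^-1`
                 Sset U D (fun i => P i.+1) (fun i => n i.+1) else set0).
Proof.
move=> H P n.
have H' := H; destr H'.
have key : forall p x, D 0 p x -> level D 0 (iter (r p) U x) /\
    phiF U D x = r p /\ U0F U D x = iter (r p) U x.
  move=> p x Dx.
  have rp := rpos p.
  have Htop : D (r p).-1 p (iter (r p).-1 U x).
    by apply: (L_fwd H) => //; rewrite prednK.
  have e : phiF U D x = r p by exact: (L_phi H Dx).
  split; last by split => //; rewrite /U0F e.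
  by rewrite -(prednK rp) iterS; exact: (L_top H Htop).
apply/seteqP; split.
- move=> x [[p _ Dx] hx].
  have [l0 [e e0]] := key p x Dx.
  exists p => //.
  have -> : condp r P n p.
    rewrite /condp; apply/implyP => P0; apply/eqP.
    by have := hx 0%N P0; rewrite /= e.
  split => //; split => // i Pi.
  by have := hx i.+1 Pi; rewrite iterSr e0.
- move=> x [p _]; case: ifP => // cp [Dx [l0 hx]].
  have [_ [e e0]] := key p x Dx.
  split; first by exists p.
  case=> [|i] Pi.
    by rewrite /= e; move: cp; rewrite /condp Pi /= => /eqP.
  by rewrite iterSr e0; apply: hx.
Qed.

Lemma Sset_meas d (T : measurableType d) (R : realType) (I : countType)
  (mu : probability T R) U D r J Cd beta :
  @expanding_young_tower d T R I mu U D r J Cd beta ->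
  forall m (P : pred nat) n, (forall i, P i -> (i < m)%N) -> measurable (Sset U D P n).
Proof.
move=> H; have H' := H; destr H'.
have ml0 : measurable (level D 0).
  by apply: countable_bigcupT_measurable; [exact: countableP|move=> q; exact: mD].
elim=> [|m IH] P n hP.
  have -> : Sset U D P n = level D 0; last exact: ml0.
  apply/seteqP; split; first by move=> x [].
  by move=> x lx; split => // i /hP.
rewrite (Sset_dec H).
apply: countable_bigcupT_measurable; first exact: countableP.
move=> p; case: ifP => _ //.
apply: measurableI; first exact: mD.
apply: L_pre; first exact: L_iter_meas.
by apply: IH => i /hP.
Qed.

Lemma piece_eq d (T : measurableType d) (R : realType) (I : countType)
  (mu : probability T R) U D r J Cd beta :
  @expanding_young_tower d T R I mu U D r J Cd beta ->
  forall p S, measurable S ->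
  mu (D 0 p `&` iter (r p) U @^-1` S) = mu (D (r p).-1 p `&` U @^-1` S).
Proof.
move=> H; have H' := H; destr H' => p S mS.
have rp := rpos p.
have -> : D 0 p `&` iter (r p) U @^-1` S =
          iter (r p).-1 U @^-1` (D (r p).-1 p `&` U @^-1` S).
  apply/seteqP; split => x /=.
    move=> [Dx Sx]; split.
      by apply: (L_fwd H) => //; rewrite prednK.
    by rewrite -iterS prednK.
  move=> [Dx Sx]; split; first exact: (L_backn H Dx).
  by rewrite -(prednK rp) iterS.
rewrite (L_iter_pres H) //.
by apply: measurableI; [exact: mD|exact: L_pre].
Qed.


Lemma prod_split (R : realType) m (P : pred nat) (F : nat -> R) :
  \prod_(i < m.+1 | P i) F i =
  (if P 0%N then F 0%N else 1) * \prod_(i < m | P i.+1) F i.+1.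
Proof.
by rewrite big_mkcond big_ord_recl /= [in RHS]big_mkcond.
Qed.

Lemma Sset_sum d (T : measurableType d) (R : realType) (I : countType)
  (mu : probability T R) U D r J Cd beta :
  @expanding_young_tower d T R I mu U D r J Cd beta ->
  forall m (P : pred nat) n, (forall i, P i -> (i < m.+1)%N) ->
  let S' := Sset U D (fun i => P i.+1) (fun i => n i.+1) in
  mu (Sset U D P n) = (\sum_(0 <= k <oo | k \in setT)
     mu (pk (fun p => if condp r P n p then D (r p).-1 p `&` U @^-1` S'
                      else set0) k))%E.
Proof.
move=> H; have H' := H; destr H' => m P n hP S'.
have mS' : measurable S'.
  apply: (Sset_meas H (m := m)) => i Pi; have := hP _ Pi; by rewrite ltnS.
rewrite (Sset_dec H) -pk_cup measure_bigcup //; last first.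
  apply: (pk_triv (h := fun _ => 0%N) Ddis) => p.
  by case: ifP => // _ x [].
- move=> k _; apply: pk_meas => p; case: ifP => _ //.
  apply: measurableI; first exact: mD.
  by apply: L_pre => //; exact: L_iter_meas.
- apply: eq_eseriesr => k _; rewrite /pk; case: pickle_inv => // p.
  case: ifP => _ //.
  exact: (piece_eq H).
Qed.

Lemma main_ind d (T : measurableType d) (R : realType) (I : countType)
  (mu : probability T R) U D r J Cd beta (C0 rho : R) :
  @expanding_young_tower d T R I mu U D r J Cd beta ->
  0 < rho ->
  (forall n : nat, (mu (level D n) <= (C0 * rho ^+ n)%:E)%E) ->
  0 < fine (mu (level D 0)) ->
  forall m (P : pred nat) n, (forall i, P i -> (i < m)%N) ->
  (forall i, P i -> (0 < n i)%N) ->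
  (mu (Sset U D P n) <= (\prod_(i < m | P i)
      ((1 + Cd) ^+ 2 * C0 / (fine (mu (level D 0)) * rho) * rho ^+ n i))%:E)%E.
Proof.
move=> H rho0 hC0 l0; have H' := H; destr H'.
set l := fine (mu (level D 0)).
set K := 1 + Cd.
set C := K ^+ 2 * C0 / (l * rho).
have ml0 : measurable (level D 0).
  by apply: countable_bigcupT_measurable; [exact: countableP|move=> q; exact: mD].
have eml : mu (level D 0) = l%:E by exact: L_fin.
have C00 : 0 < C0.
  have := hC0 0%N; rewrite eml expr0 mulr1 lee_fin => h; exact: (lt_le_trans l0 h).
have K0 : 0 < K by rewrite addr_gt0.
have C0p : 0 < C by rewrite divr_gt0 ?mulr_gt0 ?exprn_gt0.
elim=> [|m IH] P n hP hn.
  rewrite big_pred0; last by move=> i; apply/negP => /hP.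
  have -> : Sset U D P n = level D 0.
    apply/seteqP; split; first by move=> x [].
    by move=> x lx; split => // i /hP.
  exact: probability_le1.
set S' := Sset U D (fun i => P i.+1) (fun i => n i.+1).
have mS' : measurable S'.
  apply: (Sset_meas H (m := m)) => i Pi; have := hP _ Pi; by rewrite ltnS.
have IH' : (mu S' <= (\prod_(i < m | P i.+1) (C * rho ^+ n i.+1))%:E)%E.
  apply: IH => i Pi; [by have := hP _ Pi; rewrite ltnS | exact: hn].
rewrite (Sset_sum H (m:=m) (P:=P) n hP) (prod_split m P (fun i => C * rho ^+ n i)).
have Pge : 0 <= \prod_(i < m | P i.+1) (C * rho ^+ n i.+1).
  by apply: prodr_ge0 => i _; rewrite mulr_ge0 // ltW // exprn_gt0.
case: ifP => P0; last first.
  have ec : forall p, condp r P n p by move=> p; rewrite /condp P0.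
  rewrite mul1r -measure_bigcup //; last first.
  - apply: (pk_triv (h := fun p => (r p).-1) Ddis) => p.
    by rewrite ec => x [].
  - move=> k _; apply: pk_meas => p; rewrite ec.
    by apply: measurableI; [exact: mD | exact: L_pre].
  apply: le_trans IH'.
  rewrite -(Upres _ mS'); apply: le_measure.
  - apply/mem_set; apply: bigcupT_measurable => k; apply: pk_meas => p; rewrite ec.
    by apply: measurableI; [exact: mD | exact: L_pre].
  - by apply/mem_set; exact: L_pre.
  - move=> x [k _]; rewrite /pk; case: pickle_inv => // p.
    by rewrite ec => -[].
have n0 := hn 0%N P0.
have eS' : mu S' = (fine (mu S'))%:E by exact: L_fin.
set s' := fine (mu S') in eS'.
have s'0 : 0 <= s' by exact: fine_ge0 (measure_ge0 mu S').
set Y := fun p => if condp r P n p then D (r p).-1 p `&` U @^-1` S' else set0.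
set Tt := fun p => if condp r P n p then D (r p).-1 p else set0.
have mTt : forall k, measurable (pk Tt k).
  by apply: pk_meas => p; rewrite /Tt; case: ifP => // _; exact: mD.
have KS0 : 0 <= K ^+ 2 * s' by rewrite mulr_ge0 // exprn_ge0 // ltW.
have step1 : (l%:E * (\sum_(0 <= k <oo | k \in setT) mu (pk Y k)) <=
    ((K ^+ 2 * s') * (C0 * rho ^+ (n 0%N).-1))%:E)%E.
  rewrite -nneseriesZl; last by move=> i _; exact: measure_ge0.
  apply: (@le_trans _ _ (\sum_(0 <= k <oo | k \in setT) ((K ^+ 2 * s')%:E * mu (pk Tt k)))%E).
    apply: lee_nneseries.
      by move=> i _ _; apply: mule_ge0; [rewrite lee_fin; exact: ltW | exact: measure_ge0].
    move=> k _; rewrite /pk; case: pickle_inv => [p|]; last by rewrite measure0 !mule0.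
    rewrite /Y /Tt; case: ifP => _; last by rewrite measure0 !mule0.
    have := L_dist H p mS' (fun x (h : S' x) => proj1 h).
    by rewrite eml eS' muleAC -EFinM.
  rewrite nneseriesZl; last by move=> i _; exact: measure_ge0.
  rewrite -measure_bigcup //; last first.
    apply: (pk_triv (h := fun p => (r p).-1) Ddis) => p.
    by rewrite /Tt; case: ifP => _ x.
  rewrite (EFinM (K ^+ 2 * s')); apply: lee_pmul => //.
  apply: le_trans (hC0 (n 0%N).-1).
  apply: le_measure.
  - by apply/mem_set; apply: bigcupT_measurable.
  - apply/mem_set; apply: countable_bigcupT_measurable; first exact: countableP.
    by move=> q; exact: mD.
  - move=> x [k _]; rewrite /pk; case: pickle_inv => // p.
    rewrite /Tt /condp P0 /=; case: ifP => // /eqP <- Dx.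
    by exists p.
have ms : measurable (Sset U D P n) by exact: (Sset_meas H (m:=m.+1) (P:=P) n hP).
have ess : (\sum_(0 <= k <oo | k \in setT) mu (pk Y k))%E =
    (fine (mu (Sset U D P n)))%:E.
  by rewrite -(L_fin mu ms) (Sset_sum H (m:=m) (P:=P) n hP).
rewrite ess; rewrite ess -EFinM lee_fin in step1.
rewrite lee_fin.
move: IH'; rewrite eS' lee_fin => IH'.
set s := fine (mu (Sset U D P n)) in step1 *.
set Pi := \prod_(i < m | P i.+1) (C * rho ^+ n i.+1) in IH' Pge *.
have ln0 : l != 0 by rewrite gt_eqF.
have rn0 : rho != 0 by rewrite gt_eqF.
have eC : C * rho ^+ n 0%N = K ^+ 2 * C0 * rho ^+ (n 0%N).-1 / l.
  have er : rho ^+ n 0%N = rho * rho ^+ (n 0%N).-1 by rewrite -exprS prednK.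
  rewrite /C er; field.
  by rewrite ln0 rn0.
have h1 : s <= K ^+ 2 * s' * (C0 * rho ^+ (n 0%N).-1) / l.
  by rewrite ler_pdivlMr // mulrC.
apply: (le_trans h1).
have -> : K ^+ 2 * s' * (C0 * rho ^+ (n 0%N).-1) / l =
   (K ^+ 2 * C0 * rho ^+ (n 0%N).-1 / l) * s' by ring.
rewrite -eC; apply: ler_wpM2l => //.
by rewrite mulr_ge0 // ?exprn_ge0 // ltW.
Qed.

Unset Implicit Arguments.
Set Strict Implicit.


Lemma prod_fset (R : realType) (F : {fset nat}) (f : nat -> R) m :
  (forall i, i \in F -> (i < m)%N) ->
  \prod_(i <- F) f i = \prod_(i < m | (i : nat) \in F) f i.
Proof.
move=> hF.
rewrite -(@big_mkord _ 1 *%R m (fun i : nat => i \in F) f) -[in RHS]big_filter.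
apply: perm_big; apply: uniq_perm.
- exact: fset_uniq.
- by apply: filter_uniq; exact: iota_uniq.
- move=> i; rewrite mem_filter mem_iota add0n.
  by case iF: (i \in F) => //=; rewrite subn0 hF.
Qed.

Theorem lemmaA1 (d : measure_display) (T : measurableType d) (R : realType)
  (I : countType) (mu : probability T R) (U : T -> T)
  (D : nat -> I -> set T) (r : I -> nat) (J : T -> R) (Cd beta : R)
  (C0 rho : R) :
  expanding_young_tower mu U D r J Cd beta ->
  0 < rho -> rho < 1 ->
  (forall n : nat, (mu (level D n) <= (C0 * rho ^+ n)%:E)%E) ->
  let Delta0 := level D 0 in
  let phi := first_return U Delta0 in
  let U0 := fun x => iter (phi x) U x in
  exists C : R, 0 < C /\
    forall (F : {fset nat}) (n : nat -> nat),
      (forall i, i \in F -> (0 < n i)%N) ->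
      (mu [set x | Delta0 x /\ forall i, i \in F -> phi (iter i U0 x) = n i]
        <= (\prod_(i <- F) (C * rho ^+ n i))%:E)%E.
Proof.
move=> H rho0 rho1 hC0 Delta0 phi U0.
have H' := H; destr H'.
have ml0 : measurable (level D 0).
  by apply: countable_bigcupT_measurable; [exact: countableP|move=> q; exact: mD].
have eml : mu (level D 0) = (fine (mu (level D 0)))%:E by exact: L_fin.
set l := fine (mu (level D 0)) in eml.
have bnd : forall F : {fset nat}, forall i, i \in F ->
    (i < (\max_(j <- F) j)%N.+1)%N.
  move=> F i iF; rewrite ltnS.
  by have := @leq_bigmax_seq _ (enum_fset F) xpredT (fun j => j) i iF isT.
have eS : forall (F : {fset nat}) n,
   [set x | Delta0 x /\ forall i, i \in F -> phi (iter i U0 x) = n i] =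
   Sset U D (fun i => i \in F) n by [].
have l0 : 0 <= l by exact: fine_ge0 (measure_ge0 mu _).
case: (ltrP 0 l) => lp; last first.
  exists 1; split => // F n hn.
  rewrite eS.
  apply: (@le_trans _ _ (mu (level D 0))).
    apply: le_measure.
    - by apply/mem_set; exact: (Sset_meas H (P:=fun i : nat => i \in F) n (bnd F)).
    - exact/mem_set.
    - by move=> x [].
  rewrite eml lee_fin.
  have -> : l = 0 by apply/eqP; rewrite eq_le lp l0.
  by apply: prodr_ge0 => i _; rewrite mul1r exprn_ge0 // ltW.
exists ((1 + Cd) ^+ 2 * C0 / (l * rho)); split.
  have C00 : 0 < C0.
    have := hC0 0%N; rewrite eml expr0 mulr1 lee_fin => h; exact: (lt_le_trans lp h).
  by rewrite divr_gt0 ?mulr_gt0 ?exprn_gt0 // addr_gt0.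
move=> F n hn.
rewrite eS (prod_fset _ F _ _ (bnd F)).
exact: (main_ind H rho0 hC0 lp (P:=fun i : nat => i \in F) (bnd F) hn).
Qed.
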